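(* Let $G$ be the $2$-coloured collection consisting of the eight arity-$2$ elements $(c;d_1d_2)$, $c,d_1,d_2\in\{1,2\}$, of $\mathrm{Bulle}$, with their colours. Then $\mathrm{Bulle}$ admits the presentation $(G,\leftrightarrow)$, where $\leftrightarrow$ is the following equivalence relation on coloured syntax trees of degree $2$ on $G$. For each $(c;d_1d_2d_3)$ with $c,d_1,d_2,d_3\in\{1,2\}$, the four trees $$\mathfrak c(c;e\,d_3)\circ_1\mathfrak c(e;d_1d_2)\quad\text{and}\quad\mathfrak c(c;d_1e)\circ_2\mathfrak c(e;d_2d_3),\qquad e\in\{1,2\},$$ are pairwise equivalent. This gives sixteen classes, of four trees each, and these are all the nontrivial relations. That is, two degree-$2$ trees are related iff they evaluate to the same element of $\mathrm{Bulle}$. Consequently, $\mathrm{Bulle}$ is isomorphic to $\mathcal F(G)/\!\equiv$, where $\equiv$ is the smallest coloured operadic congruence containing $\leftrightarrow$, via the morphism sending $\mathfrak c(g)$ to $g$.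
   Context: The $2$-coloured operad $\mathrm{Bulle}$ has as elements of arity $n\ge2$ (bubbles) the pairs $(c;d_1\cdots d_n)$ with $c,d_i\in\{1,2\}$, with output colour $c$ and $i$th input colour $d_i$. It also has two units $\mathbf 1_1,\mathbf 1_2$, with $\mathbf 1_c$ of output and input colour $c$. Its composition $(c;d_1\cdots d_n)\circ_i(e;f_1\cdots f_m)$ is defined iff $d_i=e$, and equals $(c;d_1\cdots d_{i-1}f_1\cdots f_md_{i+1}\cdots d_n)$. Geometrically, a bubble is a polygon with $n+1$ vertices whose base and edges are each blue or uncoloured, with no coloured diagonals: the output colour is $1$ iff the base is blue, and the $i$th input colour is $2$ iff the $i$th edge is blue. For a $2$-coloured collection $G$ (elements of arity $\ge2$ with output and input colours), $\mathcal F(G)$ is the free $2$-coloured operad: coloured syntax trees (planar rooted trees with nodes of arity $\ell$ labelled by elements of $G(\ell)$, such that the $i$th child of a node labelled $x$, if internal with label $y$, satisfies $\mathrm{In}_i(x)=\mathrm{Out}(y)$), composed by grafting. Here $\mathfrak c(x)$ is the corolla labelled $x$, the degree of a tree is its number of internal nodes, and $\mathfrak c(x)\circ_i\mathfrak c(y)$ is the tree obtained by grafting the corolla of $y$ on the $i$th leaf of the corolla of $x$. A presentation $(G,\leftrightarrow)$ of a coloured operad $\mathcal C$ means that $\mathcal C\cong\mathcal F(G)/\!\equiv$ with $\equiv$ the smallest coloured operadic congruence containing $\leftrightarrow$. *)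

(* Defs.v *)
From mathcomp Require Import all_boot.

Set Implicit Arguments.
Unset Strict Implicit.
Unset Printing Implicit Defensive.

Inductive colour : Type := C1 | C2.

(* An element is a pair (c, s) = (c; d_1 ... d_n): output colour c,    *)
(* input colours s.  Bubbles are those with n >= 2; the unit 1_c is    *)
(* (c; c).                                                             *)
Definition bulle_elt := (colour * seq colour)%type.

Definition is_bulle (x : bulle_elt) : Prop :=
  2 <= size x.2 \/ x.2 = [:: x.1].

Definition bunit (c : colour) : bulle_elt := (c, [:: c]).

(* Partial composition x o_{i+1} y (indices are 0-based here: position i
   means the (i+1)-th input).  It is defined iff i < size x.2 and the
   i-th input colour of x equals the output colour of y. *)
Definition bcomp_defined (x : bulle_elt) (i : nat) (y : bulle_elt) : Prop :=
  i < size x.2 /\ nth C1 x.2 i = y.1.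

Definition bcomp (x : bulle_elt) (i : nat) (y : bulle_elt) : bulle_elt :=
  (x.1, take i x.2 ++ y.2 ++ drop i.+1 x.2).

(* Leaf d is a leaf of colour d (a lone leaf is the unit tree of colour *)
(* d); Node c d1 d2 l r is a node labelled (c; d1 d2) with children l r.*)
Inductive tree : Type :=
| Leaf (d : colour)
| Node (c d1 d2 : colour) (l r : tree).

Definition out (t : tree) : colour :=
  match t with Leaf d => d | Node c _ _ _ _ => c end.

Fixpoint wf (t : tree) : Prop :=
  match t with
  | Leaf _ => True
  | Node _ d1 d2 l r => wf l /\ wf r /\ out l = d1 /\ out r = d2
  end.

Fixpoint leaves (t : tree) : seq colour :=
  match t with
  | Leaf d => [:: d]
  | Node _ _ _ l r => leaves l ++ leaves r
  end.

Fixpoint degree (t : tree) : nat :=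
  match t with
  | Leaf _ => 0
  | Node _ _ _ l r => (degree l + degree r).+1
  end.

(* grafting s on the i-th leaf (0-based) of t *)
Fixpoint graft (t : tree) (i : nat) (s : tree) : tree :=
  match t with
  | Leaf d => if i == 0 then s else Leaf d
  | Node c d1 d2 l r =>
      if i < size (leaves l) then Node c d1 d2 (graft l i s) r
      else Node c d1 d2 l (graft r (i - size (leaves l)) s)
  end.

Definition graft_defined (t : tree) (i : nat) (s : tree) : Prop :=
  i < size (leaves t) /\ nth C1 (leaves t) i = out s.

Definition corolla (c d1 d2 : colour) : tree :=
  Node c d1 d2 (Leaf d1) (Leaf d2).

Definition rel_class (c d1 d2 d3 : colour) (t : tree) : Prop :=
  exists e : colour,
    t = graft (corolla c e d3) 0 (corolla e d1 d2) \/
    t = graft (corolla c d1 e) 1 (corolla e d2 d3).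

Definition brel (t t' : tree) : Prop :=
  exists c d1 d2 d3 : colour, rel_class c d1 d2 d3 t /\ rel_class c d1 d2 d3 t'.

Inductive cong : tree -> tree -> Prop :=
| cong_base t t' : brel t t' -> cong t t'
| cong_refl t : wf t -> cong t t
| cong_sym t t' : cong t t' -> cong t' t
| cong_trans t t' t'' : cong t t' -> cong t' t'' -> cong t t''
| cong_graft t t' s s' i :
    cong t t' -> cong s s' -> graft_defined t i s ->
    cong (graft t i s) (graft t' i s').

Fixpoint ev (t : tree) : bulle_elt :=
  match t with
  | Leaf d => bunit d
  | Node c d1 d2 l r => bcomp (bcomp (c, [:: d1; d2]) 1 (ev r)) 0 (ev l)
  end.

(* Main.v *)
Require Import Defs.
From mathcomp Require Import all_boot.
From mathcomp Require Import zify.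

Lemma evE t : ev t = (out t, leaves t).
Proof.
elim: t => [d|c d1 d2 l IHl r IHr] //=.
rewrite IHl IHr /bcomp /=; by rewrite drop0 cats0.
Qed.

Lemma leaves_size t : 0 < size (leaves t).
Proof. elim: t => [d|c d1 d2 l IHl r IHr] //=; rewrite size_cat; lia. Qed.

Lemma drop_catl (T : Type) n (s1 s2 : seq T) : n <= size s1 ->
  drop n (s1 ++ s2) = drop n s1 ++ s2.
Proof. by elim: s1 n => [|x s IH] [|n] //= => [_|H]; rewrite ?drop0 // IH. Qed.
Lemma take_catl (T : Type) n (s1 s2 : seq T) : n <= size s1 ->
  take n (s1 ++ s2) = take n s1.
Proof. by elim: s1 n => [|x s IH] [|n] //= => [_|H]; rewrite ?take0 // IH. Qed.
Lemma drop_catr (T : Type) n (s1 s2 : seq T) : size s1 <= n ->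
  drop n (s1 ++ s2) = drop (n - size s1) s2.
Proof. elim: s1 n => [|x s IH] n H /=; first by rewrite subn0.
by case: n H => // n H; rewrite /= IH. Qed.
Lemma take_catr (T : Type) n (s1 s2 : seq T) : size s1 <= n ->
  take n (s1 ++ s2) = s1 ++ take (n - size s1) s2.
Proof. elim: s1 n => [|x s IH] n H /=; first by rewrite subn0.
by case: n H => // n H; rewrite /= IH. Qed.

Lemma graft_leaves t i s : i < size (leaves t) ->
  leaves (graft t i s) = take i (leaves t) ++ leaves s ++ drop i.+1 (leaves t).
Proof.
elim: t i => [d|c d1 d2 l IHl r IHr] i /=.
  by case: i => //= _; rewrite cats0.
rewrite size_cat => Hi; case: ifP => H /=.
  by rewrite IHl // take_catl ?(ltnW H) // drop_catl // !catA.
rewrite IHr; last by lia.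
rewrite take_catr; last by lia.
rewrite drop_catr; last by lia.
by rewrite subSn ?catA //; lia.
Qed.

Lemma graft_out t i s : graft_defined t i s -> out (graft t i s) = out t.
Proof.
case: t => [d|c d1 d2 l r] [] //=; first by case: i.
by case: ifP.
Qed.

Fixpoint h (c : colour) (s : seq colour) : tree :=
  match s with
  | [::] => Leaf c
  | d :: s' => match s' with
               | [::] => Leaf d
               | _ :: _ => Node c d (out (h C1 s')) (Leaf d) (h C1 s')
               end
  end.

Lemma h_wf c s : wf (h c s).
Proof.
elim: s c => [|d s IH] c //=; case: s IH => [|e s] IH //=.
by split=> //; split; [exact: IH|].
Qed.

Lemma h_leaves c s : 0 < size s -> leaves (h c s) = s.
Proof.
elim: s c => [|d s IH] c //= _; case: s IH => [|e s] IH //=.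
by rewrite IH.
Qed.

Lemma h_out2 c d e s : out (h c [:: d, e & s]) = c.
Proof. by []. Qed.

Lemma h_out_self c s : h (out (h c s)) s = h c s.
Proof. by case: s => [|d [|e s]]. Qed.

Lemma node_cong c d1 d2 l l' r r' : cong l l' -> cong r r' ->
  out l = d1 -> out r = d2 -> cong (Node c d1 d2 l r) (Node c d1 d2 l' r').
Proof.
move=> Hl Hr El Er.
have H1 : cong (graft (corolla c d1 d2) 1 r) (graft (corolla c d1 d2) 1 r').
  apply: cong_graft => //; first by apply: cong_refl.

have := @cong_graft _ _ _ _ 0 H1 Hl.
by apply; split.
Qed.

Lemma cong_wf t t' : cong t t' -> wf t -> wf t' -> cong t t'.
Proof. by []. Qed.

Lemma rot c e e' d1 d2 d3 X Y Z : wf X -> wf Y -> wf Z ->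
  out X = d1 -> out Y = d2 -> out Z = d3 ->
  cong (Node c e d3 (Node e d1 d2 X Y) Z) (Node c d1 e' X (Node e' d2 d3 Y Z)).
Proof.
move=> wX wY wZ EX EY EZ.
have B : cong (graft (corolla c e d3) 0 (corolla e d1 d2))
              (graft (corolla c d1 e') 1 (corolla e' d2 d3)).
  apply: cong_base; exists c, d1, d2, d3; split; first by exists e; left.
  by exists e'; right.
have B2 := @cong_graft _ _ _ _ 2 B (cong_refl wZ).
have B1 := @cong_graft _ _ _ _ 1 (B2 ltac:(by split)) (cong_refl wY).
have B0 := @cong_graft _ _ _ _ 0 (B1 ltac:(by split)) (cong_refl wX).
exact: (B0 ltac:(by split)).
Qed.

Lemma recol c a e e' b y X Y Z : wf X -> wf Y -> wf Z ->
  out X = a -> out Y = b -> out Z = y ->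
  cong (Node c a e X (Node e b y Y Z)) (Node c a e' X (Node e' b y Y Z)).
Proof.
move=> wX wY wZ EX EY EZ.
exact: cong_trans (cong_sym (@rot c C1 e _ _ _ _ _ _ wX wY wZ EX EY EZ)) (@rot c C1 e' _ _ _ _ _ _ wX wY wZ EX EY EZ).
Qed.

Lemma h_one c d : h c [:: d] = Leaf d.
Proof. by []. Qed.
Lemma h_cons2 c d e s :
  h c [:: d, e & s] = Node c d (out (h C1 (e :: s))) (Leaf d) (h C1 (e :: s)).
Proof. by []. Qed.

Lemma L ls : forall c d1 d2 rs, 0 < size ls -> 0 < size rs ->
  out (h d1 ls) = d1 -> out (h d2 rs) = d2 ->
  cong (Node c d1 d2 (h d1 ls) (h d2 rs)) (h c (ls ++ rs)).
Proof.
elim: ls => [|a ls IH] // c d1 d2 rs _ Hrs.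
case: ls IH => [|b ls] IH.
  rewrite h_one /= => Ea; subst d1.
  case: rs Hrs => [|b' [|b'' r]] // _.
    rewrite !h_one /= => Eb; subst b'; by apply: cong_refl.
  rewrite !h_cons2 => _.
  apply: recol => //; exact: h_wf.
rewrite h_cons2 => _ Ed2.
change ((a :: b :: ls) ++ rs) with (a :: b :: (ls ++ rs)).
rewrite h_cons2.
have -> : out (h C1 (b :: ls ++ rs)) = C1.
  by case: ls {IH} => [|? ?]; case: rs Hrs Ed2.
apply: cong_trans (@rot c d1 C1 _ _ _ _ _ _ (I : wf (Leaf a)) (h_wf _ _) (h_wf _ _) erefl erefl Ed2) _.
apply: node_cong => //; first exact: cong_refl.
have := IH C1 (out (h C1 (b :: ls))) d2 rs erefl Hrs.
rewrite h_out_self; apply => //.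
Qed.

Lemma h_out_nf t : out (h (out t) (leaves t)) = out t.
Proof.
case: t => [d|c d1 d2 l r] //=.
have := leaves_size l; have := leaves_size r.
case: (leaves l) => [|x [|y s]] //=; case: (leaves r) => [|z s'] //.
Qed.

Lemma nf t : wf t -> cong t (h (out t) (leaves t)).
Proof.
elim: t => [d|c d1 d2 l IHl r IHr] /=; first by move=> _; apply: cong_refl.
move=> [wl [wr [El Er]]]; subst d1 d2.
have K := @node_cong c _ _ _ _ _ _ (IHl wl) (IHr wr) erefl erefl.
apply: cong_trans K _.
apply: L; rewrite ?leaves_size ?h_out_nf //.
Qed.

Lemma rel_ev c d1 d2 d3 t : rel_class c d1 d2 d3 t -> out t = c /\ leaves t = [:: d1; d2; d3].
Proof. by case=> e [->|->]. Qed.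

Lemma deg2 t : wf t -> degree t = 2 ->
  exists d1 d2 d3, leaves t = [:: d1; d2; d3] /\ rel_class (out t) d1 d2 d3 t.
Proof.
case: t => [d|c a b [dl|c1 a1 b1 l1 r1] [dr|c2 a2 b2 l2 r2]] //=.
- case: l2 r2 => [x|?????] [y|?????] //=; try (move=> _ H; lia).
  move=> [_ [[_ [_ [E1 E2]]] [E3 E4]]] _; subst.
  do 3 eexists; split; first reflexivity.
  eexists; right; reflexivity.
- case: l1 r1 => [x|?????] [y|?????] //=; try (move=> _ H; lia).
  move=> [[_ [_ [E1 E2]]] [_ [E3 E4]]] _; subst.
  do 3 eexists; split; first reflexivity.
  eexists; left; reflexivity.
- move=> _ H; lia.
Qed.

Lemma graft_ev t i s : graft_defined t i s ->
  bcomp_defined (ev t) i (ev s) /\ ev (graft t i s) = bcomp (ev t) i (ev s).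
Proof.
move=> [H1 H2]; rewrite !evE; split => //.
by rewrite graft_out // graft_leaves.
Qed.

Lemma cong_ev t t' : cong t t' -> ev t = ev t'.
Proof.
elim=> {t t'}.
- move=> t t' [c [d1 [d2 [d3 [R1 R2]]]]].
  by rewrite !evE; case: (@rel_ev _ _ _ _ _ R1) => -> ->; case: (@rel_ev _ _ _ _ _ R2) => -> ->.
- by [].
- by move=> t t' _ ->.
- by move=> t t' t'' _ -> _ ->.
- move=> t t' s s' i _ Ht _ Hs Hd.
  have Hd' : graft_defined t' i s'.
    move: Hd Ht Hs; rewrite /graft_defined !evE => [[? ?]] [_ <-] [<- _]; by split.
  by rewrite (@graft_ev _ _ _ Hd).2 (@graft_ev _ _ _ Hd').2 Ht Hs.
Qed.

Theorem theorem2p5 :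
  (* <-> relates exactly the degree-2 trees with the same evaluation *)
  (forall t t', wf t -> wf t' -> degree t = 2 -> degree t' = 2 ->
     (brel t t' <-> ev t = ev t')) /\
  (* ev is a morphism of coloured operads F(G) -> Bulle *)
  (forall t, wf t -> is_bulle (ev t)) /\
  (forall t i s, wf t -> wf s -> graft_defined t i s ->
     bcomp_defined (ev t) i (ev s) /\ ev (graft t i s) = bcomp (ev t) i (ev s)) /\
  (* it is surjective *)
  (forall x, is_bulle x -> exists t, wf t /\ ev t = x) /\
  (* and its kernel is the congruence generated by <-> *)
  (forall t t', wf t -> wf t' -> (cong t t' <-> ev t = ev t')).
Proof.
split.
  move=> t t' wt wt' dt dt'; split.
    by move=> H; apply: cong_ev; apply: cong_base.
  rewrite !evE => -[Eo El].
  have [a1 [a2 [a3 [La Ra]]]] := @deg2 _ wt dt.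
  have [b1 [b2 [b3 [Lb Rb]]]] := @deg2 _ wt' dt'.
  exists (out t), a1, a2, a3; split => //.
  have : [:: a1; a2; a3] = [:: b1; b2; b3] by rewrite -La -Lb.
  by case => -> -> ->; rewrite Eo.
split.
  move=> t _; rewrite evE /is_bulle /=.
  case: t => [d|c d1 d2 l r] /=; first by right.
  left; rewrite size_cat; have := leaves_size l; have := leaves_size r; lia.
split.
  by move=> t i s _ _; exact: graft_ev.
split.
  case=> c s; rewrite /is_bulle /= => -[H|H].
    exists (h c s); split; first exact: h_wf.
    rewrite evE h_leaves; last by lia.
    by case: s H => [|x [|y s]] //.
  by subst; exists (Leaf c).
move=> t t' wt wt'; split; first exact: cong_ev.
rewrite !evE => -[Eo El].
apply: cong_trans (@nf _ wt) _.
rewrite Eo El; apply: cong_sym; exact: nf.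
Qed.
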